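(* Let $X$ be a smooth Minkowski plane and $A\subset X$ finite. If $A$ is neither a double cluster nor a pseudo double cluster, then $\mathrm{FT}(A)\subseteq A\cup\operatorname{int}\operatorname{conv}A$.
   Context: A Minkowski plane is a two-dimensional real normed space $(X,\|\cdot\|)$ with unit ball $B$; it is smooth if every boundary point of $B$ has a unique supporting line. A proper exposed face of $B$ is the intersection of $B$ with a supporting line. For finite $A$, $\mathrm{FT}(A)$ is the set of minimizers of $\mathbf{x}\mapsto\sum_{\mathbf{a}\in A}\|\mathbf{x}-\mathbf{a}\|$ (Fermat-Torricelli points). A set $C=\{\mathbf{x}_1,\dots,\mathbf{x}_m,\mathbf{y}_1,\dots,\mathbf{y}_m\}$ is a double cluster with pairs $\mathbf{x}_i,\mathbf{y}_i$ if all $\frac{\mathbf{x}_i-\mathbf{y}_i}{\|\mathbf{x}_i-\mathbf{y}_i\|}$ lie in the same proper exposed face of $B$. A pseudo double cluster is the union of a double cluster $C$, a Fermat-Torricelli point of $C$ (its centre), and one further arbitrary point. $\operatorname{int}$ denotes interior. *)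

(* Defs.v *)
(* the Minkowski plane is modelled as R^2 = R*R with an
   arbitrary norm N (every 2-dimensional real normed space is isometric to
   such a space). *)
From Stdlib Require Import Reals List.
Open Scope R_scope.

Definition pt := (R * R)%type.

Definition vadd (p q : pt) : pt := (fst p + fst q, snd p + snd q).
Definition vsub (p q : pt) : pt := (fst p - fst q, snd p - snd q).
Definition vscale (k : R) (p : pt) : pt := (k * fst p, k * snd p).

Definition is_norm (N : pt -> R) : Prop :=
  (forall x, N x = 0 -> x = (0, 0)) /\
  (forall k x, N (vscale k x) = Rabs k * N x) /\
  (forall x y, N (vadd x y) <= N x + N y).

Definition ball_B (N : pt -> R) (p : pt) : Prop := N p <= 1.

Definition is_line (L : pt -> Prop) : Prop :=
  exists a b c : R, (a <> 0 \/ b <> 0) /\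
    (forall p, L p <-> a * fst p + b * snd p = c).

Definition supporting_line (N : pt -> R) (L : pt -> Prop) : Prop :=
  exists a b c : R, (a <> 0 \/ b <> 0) /\
    (forall p, L p <-> a * fst p + b * snd p = c) /\
    (exists y, ball_B N y /\ L y) /\
    ((forall y, ball_B N y -> a * fst y + b * snd y <= c) \/
     (forall y, ball_B N y -> a * fst y + b * snd y >= c)).

Definition smooth (N : pt -> R) : Prop :=
  forall x, N x = 1 ->
  forall L1 L2, supporting_line N L1 -> supporting_line N L2 ->
  L1 x -> L2 x -> forall p, L1 p <-> L2 p.

Definition proper_exposed_face (N : pt -> R) (F : pt -> Prop) : Prop :=
  exists L, supporting_line N L /\ (forall p, F p <-> (ball_B N p /\ L p)).

Fixpoint sumdist (N : pt -> R) (l : list pt) (p : pt) : R :=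
  match l with
  | nil => 0
  | a :: l' => N (vsub p a) + sumdist N l' p
  end.

Definition FT (N : pt -> R) (l : list pt) (p : pt) : Prop :=
  forall q, sumdist N l p <= sumdist N l q.

Definition dc_data (N : pt -> R) (xs ys : list pt) : Prop :=
  length xs = length ys /\ (0 < length xs)%nat /\ NoDup (xs ++ ys) /\
  exists F, proper_exposed_face N F /\
    forall xy, In xy (combine xs ys) ->
      F (vscale (/ N (vsub (fst xy) (snd xy))) (vsub (fst xy) (snd xy))).

Definition is_double_cluster (N : pt -> R) (S : pt -> Prop) : Prop :=
  exists xs ys, dc_data N xs ys /\ (forall z, S z <-> In z (xs ++ ys)).

(* pseudo double cluster: C u {centre} u {one further arbitrary point} *)
Definition is_pseudo_double_cluster (N : pt -> R) (S : pt -> Prop) : Prop :=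
  exists xs ys c q, dc_data N xs ys /\ FT N (xs ++ ys) c /\
    (forall z, S z <-> (In z (xs ++ ys) \/ z = c \/ z = q)).

Definition conv (l : list pt) (p : pt) : Prop :=
  exists ws : list R, length ws = length l /\ (forall w, In w ws -> 0 <= w) /\
    fold_right Rplus 0 ws = 1 /\
    p = fold_right (fun wa acc => vadd (vscale (fst wa) (snd wa)) acc) (0, 0)
          (combine ws l).

Definition norm_interior (N : pt -> R) (S : pt -> Prop) (p : pt) : Prop :=
  exists e, 0 < e /\ forall q, N (vsub q p) < e -> S q.

(* Main.v *)
Require Import Defs.
From Stdlib Require Import Reals List.
From Stdlib Require Import Lra Lia Psatz Classical ClassicalEpsilon.
Open Scope R_scope.

Definition ev (f x : pt) : R := fst f * fst x + snd f * snd x.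
Definition norming (N : pt -> R) (x f : pt) :=
  (forall y, ev f y <= N y) /\ ev f x = N x.

Lemma pt_eq (p q : pt) : fst p = fst q -> snd p = snd q -> p = q.
Proof. destruct p, q; simpl; intros; subst; reflexivity. Qed.

Lemma N_scale N (HN : is_norm N) k x : N (vscale k x) = Rabs k * N x.
Proof. destruct HN as [_ [H _]]. apply H. Qed.

Lemma N_tri N (HN : is_norm N) x y : N (vadd x y) <= N x + N y.
Proof. destruct HN as [_ [_ H]]. apply H. Qed.

Lemma N_zero N (HN : is_norm N) : N (0,0) = 0.
Proof.
  replace (0,0) with (vscale 0 (0,0)).
  - rewrite N_scale by auto. rewrite Rabs_R0. ring.
  - unfold vscale; simpl; f_equal; ring.
Qed.

Lemma N_opp N (HN : is_norm N) x : N (vscale (-1) x) = N x.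
Proof. rewrite N_scale by auto. rewrite Rabs_left by lra. ring. Qed.

Lemma N_nonneg N (HN : is_norm N) x : 0 <= N x.
Proof.
  pose proof (N_tri N HN x (vscale (-1) x)).
  rewrite (N_opp N HN) in H.
  replace (vadd x (vscale (-1) x)) with ((0,0):pt) in H.
  - rewrite N_zero in H by auto. lra.
  - unfold vadd, vscale; simpl; f_equal; ring.
Qed.

Lemma N_pos N (HN : is_norm N) x : x <> (0,0) -> 0 < N x.
Proof.
  intros Hx. destruct (N_nonneg N HN x); auto.
  destruct HN as [H0 _]. exfalso. apply Hx. apply H0. auto.
Qed.

Lemma N_sub_sym N (HN : is_norm N) a b : N (vsub a b) = N (vsub b a).
Proof.
  rewrite <- (N_opp N HN (vsub b a)). f_equal.
  unfold vsub, vscale; simpl; f_equal; ring.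
Qed.

Lemma N_pos_scale N (HN : is_norm N) k x : 0 <= k -> N (vscale k x) = k * N x.
Proof. intros. rewrite N_scale by auto. rewrite (Rabs_pos_eq k) by auto. reflexivity. Qed.

Lemma norming_abs N (HN : is_norm N) x f y : norming N x f ->
  - N y <= ev f y <= N y.
Proof.
  intros [H1 _]. split; [|apply H1].
  pose proof (H1 (vscale (-1) y)). rewrite (N_opp N HN) in H.
  unfold ev, vscale in *; simpl in *. lra.
Qed.

Lemma norming_opp N (HN : is_norm N) x f : norming N x f ->
  norming N (vscale (-1) x) (vscale (-1) f).
Proof.
  intros [H1 H2]. split.
  - intros y. pose proof (H1 (vscale (-1) y)). rewrite (N_opp N HN) in H.
    unfold ev, vscale in *; simpl in *. lra.
  - rewrite (N_opp N HN). rewrite <- H2. unfold ev, vscale; simpl; ring.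
Qed.

Definition gl (N : pt -> R) (x d : pt) (t : R) := N (vadd x (vscale t d)).

Lemma gl_conv N (HN : is_norm N) x d a b l : 0 <= l <= 1 ->
  gl N x d (l * a + (1 - l) * b) <= l * gl N x d a + (1 - l) * gl N x d b.
Proof.
  intros Hl. unfold gl.
  replace (vadd x (vscale (l * a + (1 - l) * b) d)) with
    (vadd (vscale l (vadd x (vscale a d))) (vscale (1-l) (vadd x (vscale b d)))).
  - eapply Rle_trans. apply N_tri; auto.
    rewrite !N_pos_scale by (auto; lra). lra.
  - unfold vadd, vscale; simpl; f_equal; ring.
Qed.

Lemma three_slope N (HN : is_norm N) x d t1 t2 : t1 < 0 < t2 ->
  (gl N x d 0 - gl N x d t1) * t2 <= (gl N x d t2 - gl N x d 0) * (- t1).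
Proof.
  intros [H1 H2].
  set (l := t2 / (t2 - t1)).
  assert (Hl : 0 <= l <= 1).
  { unfold l; split. apply Rmult_le_pos; [lra|]. left; apply Rinv_0_lt_compat; lra.
    apply Rmult_le_reg_r with (t2 - t1); [lra|]. field_simplify; lra. }
  pose proof (gl_conv N HN x d t1 t2 l Hl).
  replace (l * t1 + (1 - l) * t2) with 0 in H by (unfold l; field; lra).
  assert (E1: l * (t2 - t1) = t2) by (unfold l; field; lra).
  assert (E2: (1 - l) * (t2 - t1) = - t1) by (unfold l; field; lra).
  assert (gl N x d 0 * (t2 - t1) <= (l * gl N x d t1 + (1 - l) * gl N x d t2) * (t2 - t1)).
  { apply Rmult_le_compat_r; lra. }
  replace ((l * gl N x d t1 + (1 - l) * gl N x d t2) * (t2 - t1)) with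
    (gl N x d t1 * (l * (t2 - t1)) + gl N x d t2 * ((1 - l) * (t2 - t1))) in H0 by ring.
  rewrite E1, E2 in H0. lra.
Qed.

Lemma slope_mono N (HN : is_norm N) x d t t0 : 0 < t <= t0 ->
  (gl N x d t - gl N x d 0) * t0 <= (gl N x d t0 - gl N x d 0) * t.
Proof.
  intros [H1 H2].
  set (l := t / t0).
  assert (Hl : 0 <= l <= 1).
  { unfold l; split. apply Rmult_le_pos; [lra|]. left; apply Rinv_0_lt_compat; lra.
    apply Rmult_le_reg_r with t0; [lra|]. field_simplify; lra. }
  pose proof (gl_conv N HN x d t0 0 l Hl).
  replace (l * t0 + (1 - l) * 0) with t in H by (unfold l; field; lra).
  assert (E1: l * t0 = t) by (unfold l; field; lra).
  assert (gl N x d t * t0 <= (l * gl N x d t0 + (1 - l) * gl N x d 0) * t0).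
  { apply Rmult_le_compat_r; lra. }
  replace ((l * gl N x d t0 + (1 - l) * gl N x d 0) * t0) with
    (gl N x d t0 * (l * t0) + gl N x d 0 * (t0 - l * t0)) in H0 by ring.
  rewrite E1 in H0. lra.
Qed.

Definition cr (x d : pt) := fst x * snd d - snd x * fst d.

Lemma build_functional N (HN : is_norm N) x d s : cr x d <> 0 ->
  (forall t, N x + s * t <= gl N x d t) ->
  exists f, norming N x f /\ ev f d = s.
Proof.
  intros Hc Hg. destruct x as [x1 x2], d as [d1 d2]. unfold cr in Hc; simpl in Hc.
  remember (x1 * d2 - x2 * d1) as c eqn:Hcd.
  remember (N (x1, x2)) as nx eqn:Hnx.
  exists ((nx * d2 - s * x2) / c, (s * x1 - nx * d1) / c).
  assert (Hpos : forall y, 0 < (fst y * d2 - snd y * d1) / c ->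
     ev ((nx * d2 - s * x2) / c, (s * x1 - nx * d1) / c) y <= N y).
  { intros [y1 y2] Ha; simpl in Ha.
    remember ((y1 * d2 - y2 * d1) / c) as al eqn:Hal.
    remember ((x1 * y2 - x2 * y1) / c) as be eqn:Hbe.
    assert (Ey : (y1, y2) = vscale al (vadd (x1,x2) (vscale (be/al) (d1,d2)))).
    { unfold vscale, vadd; simpl. subst al be c. apply pt_eq; simpl; field. all: try split. all: auto. all: intro Hz; rewrite Hz in Ha; unfold Rdiv in Ha; rewrite Rmult_0_l in Ha; lra. }
    assert (Hev : ev ((nx * d2 - s * x2) / c, (s * x1 - nx * d1) / c) (y1,y2) = al * nx + be * s).
    { unfold ev; simpl. subst al be c. field. auto. }
    rewrite Hev, Ey. rewrite N_pos_scale by (auto; lra).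
    pose proof (Hg (be/al)). unfold gl in H.
    apply Rle_trans with (al * (nx + s * (be/al))).
    - right. field. lra.
    - apply Rmult_le_compat_l; lra. }
  split; [split|].
  - intros [y1 y2].
    remember ((y1 * d2 - y2 * d1) / c) as al eqn:Hal.
    remember (Rabs al + 1) as k eqn:Hkd.
    pose proof (Hpos (vadd (y1,y2) (vscale k (x1,x2)))) as Hp.
    assert (Hk : 0 < (fst (vadd (y1,y2) (vscale k (x1,x2))) * d2 - snd (vadd (y1,y2) (vscale k (x1,x2))) * d1) / c).
    { replace ((fst (vadd (y1,y2) (vscale k (x1,x2))) * d2 - snd (vadd (y1,y2) (vscale k (x1,x2))) * d1) / c) with (al + k).
      - subst k. pose proof (Rle_abs (-al)). rewrite Rabs_Ropp in H. lra.
      - unfold vadd, vscale; simpl. subst al c. field. auto. }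
    specialize (Hp Hk).
    pose proof (N_tri N HN (y1,y2) (vscale k (x1,x2))).
    rewrite N_pos_scale in H by (auto; subst k; pose proof (Rabs_pos al); lra).
    rewrite <- Hnx in H.
    assert (E : ev ((nx * d2 - s * x2) / c, (s * x1 - nx * d1) / c) (vadd (y1, y2) (vscale k (x1, x2)))
      = ev ((nx * d2 - s * x2) / c, (s * x1 - nx * d1) / c) (y1,y2) + k * nx).
    { unfold ev, vadd, vscale; simpl. subst c. field. auto. }
    lra.
  - unfold ev; simpl. subst c. rewrite <- Hnx. field. auto.
  - unfold ev; simpl. subst c. field. auto.
Qed.

Lemma exists_norming N (HN : is_norm N) x : x <> (0,0) -> exists f, norming N x f.
Proof.
  intros Hx.
  set (d := (- snd x, fst x)).
  assert (Hc : cr x d <> 0).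
  { unfold cr, d; simpl. destruct x as [x1 x2]; simpl.
    intro H. apply Hx. assert (x1 = 0) by nra. assert (x2 = 0) by nra. subst; auto. }
  set (g := gl N x d).
  set (E := fun q => exists t, t < 0 /\ q = (g t - g 0) / t).
  assert (Hb : bound E).
  { exists (g 1 - g 0). intros q [t [Ht ->]].
    pose proof (three_slope N HN x d t 1 (conj Ht Rlt_0_1)). fold g in H.
    apply Rmult_le_reg_r with (-t); [lra|].
    replace ((g t - g 0) / t * - t) with (g 0 - g t) by (field; lra). lra. }
  assert (He : exists q, E q) by (exists ((g (-1) - g 0) / (-1)); exists (-1); split; [lra|auto]).
  destruct (completeness E Hb He) as [s [Hs1 Hs2]].
  assert (Hg : forall t, N x + s * t <= gl N x d t).
  { intros t. fold g.
    assert (Hg0 : g 0 = N x).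
    { unfold g, gl. f_equal. destruct x; unfold vadd, vscale; simpl; f_equal; ring. }
    destruct (Rtotal_order t 0) as [Ht|[Ht|Ht]].
    - assert (E ((g t - g 0) / t)) by (exists t; split; auto).
      apply Hs1 in H.
      apply Rmult_le_compat_neg_l with (r := t) in H; [|lra].
      replace (t * ((g t - g 0) / t)) with (g t - g 0) in H by (field; lra). nra.
    - subst. rewrite Hg0. lra.
    - assert (s <= (g t - g 0) / t).
      { apply Hs2. intros q [t' [Ht' ->]].
        pose proof (three_slope N HN x d t' t (conj Ht' Ht)). fold g in H.
        apply Rmult_le_reg_r with (-t'); [lra|].
        replace ((g t' - g 0) / t' * - t') with (g 0 - g t') by (field; lra).
        apply Rmult_le_reg_r with t; [lra|].
        replace ((g t - g 0) / t * - t' * t) with ((g t - g 0) * (- t')) by (field; lra). lra. }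
      apply Rmult_le_compat_r with (r := t) in H; [|lra].
      replace ((g t - g 0) / t * t) with (g t - g 0) in H by (field; lra). nra. }
  destruct (build_functional N HN x d s Hc Hg) as [f [Hf _]]. eauto.
Qed.

Definition nf (N : pt -> R) (x : pt) : pt :=
  epsilon (inhabits ((0,0):pt)) (fun f => norming N x f).

Lemma nf_spec N (HN : is_norm N) x : x <> (0,0) -> norming N x (nf N x).
Proof.
  intros Hx. unfold nf. apply epsilon_spec. apply exists_norming; auto.
Qed.

Definition Lf (f : pt) : pt -> Prop := fun q => fst f * fst q + snd f * snd q = 1.

Lemma norming_nonzero N (HN : is_norm N) x f : x <> (0,0) -> norming N x f ->
  fst f <> 0 \/ snd f <> 0.
Proof.
  intros Hx [_ H2]. pose proof (N_pos N HN x Hx).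
  destruct (Req_dec (fst f) 0); [right|left; auto].
  intro H3. unfold ev in H2. rewrite H0, H3 in H2. lra.
Qed.

Lemma norming_supp N (HN : is_norm N) x f : x <> (0,0) -> norming N x f ->
  supporting_line N (Lf f) /\ Lf f (vscale (/ N x) x).
Proof.
  intros Hx Hf. pose proof (N_pos N HN x Hx).
  assert (Hu : Lf f (vscale (/ N x) x)).
  { destruct Hf as [_ H2]. unfold Lf, ev, vscale in *; simpl.
    replace (fst f * (/ N x * fst x) + snd f * (/ N x * snd x)) with
      (/ N x * (fst f * fst x + snd f * snd x)) by ring.
    rewrite H2. field. lra. }
  split; auto.
  exists (fst f), (snd f), 1. split; [eapply norming_nonzero; eauto|].
  split; [intros; unfold Lf; tauto|]. split.
  - exists (vscale (/ N x) x). split; auto.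
    unfold ball_B. rewrite N_pos_scale by (auto; left; apply Rinv_0_lt_compat; auto).
    right. field. lra.
  - left. intros y Hy. unfold ball_B in Hy. destruct Hf as [H1 _].
    specialize (H1 y). unfold ev in H1. lra.
Qed.

Lemma norming_unique N (HN : is_norm N) (Hsm : smooth N) x f f' : x <> (0,0) ->
  norming N x f -> norming N x f' -> f = f'.
Proof.
  intros Hx Hf Hf'.
  destruct (norming_supp N HN x f Hx Hf) as [S1 U1].
  destruct (norming_supp N HN x f' Hx Hf') as [S2 U2].
  pose proof (N_pos N HN x Hx).
  assert (Hu : N (vscale (/ N x) x) = 1).
  { rewrite N_pos_scale by (auto; left; apply Rinv_0_lt_compat; auto). field. lra. }
  pose proof (Hsm _ Hu _ _ S1 S2 U1 U2) as Heq.
  set (u := vscale (/ N x) x) in *. clearbody u.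
  assert (Hq : Lf f (vadd u (- snd f, fst f))).
  { unfold Lf in *. rewrite <- U1. unfold vadd; simpl; ring. }
  apply Heq in Hq. unfold Lf in *. unfold vadd in Hq; simpl in Hq.
  destruct f as [f1 f2], f' as [g1 g2]; simpl in *.
  assert (C : g1 * f2 = g2 * f1) by nra.
  apply pt_eq; simpl.
  - transitivity (f1 * (g1 * fst u + g2 * snd u)); [rewrite U2; ring|].
    transitivity (g1 * (f1 * fst u + f2 * snd u)); [|rewrite U1; ring].
    replace (g1 * (f1 * fst u + f2 * snd u)) with (f1 * g1 * fst u + (g1 * f2) * snd u) by ring.
    rewrite C; ring.
  - transitivity (f2 * (g1 * fst u + g2 * snd u)); [rewrite U2; ring|].
    transitivity (g2 * (f1 * fst u + f2 * snd u)); [|rewrite U1; ring].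
    replace (f2 * (g1 * fst u + g2 * snd u)) with ((g1 * f2) * fst u + f2 * g2 * snd u) by ring.
    rewrite C; ring.
Qed.

Lemma gl0 N x d : gl N x d 0 = N x.
Proof. unfold gl. f_equal. destruct x; unfold vadd, vscale; simpl; f_equal; ring. Qed.

Lemma deriv_upper N (HN : is_norm N) (Hsm : smooth N) x d e : x <> (0,0) -> 0 < e ->
  exists t0, 0 < t0 /\ forall t, 0 < t <= t0 ->
    gl N x d t <= N x + t * (ev (nf N x) d + e).
Proof.
  intros Hx He. set (f := nf N x). pose proof (nf_spec N HN x Hx) as Hf. fold f in Hf.
  set (s := ev f d + e).
  destruct (classic (exists t0, 0 < t0 /\ gl N x d t0 < N x + t0 * s)) as [[t0 [Ht0 Hlt]]|Hno].
  - exists t0. split; auto. intros t Ht.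
    pose proof (slope_mono N HN x d t t0 Ht). rewrite gl0 in H.
    assert ((gl N x d t - N x) * t0 < t0 * s * t).
    { eapply Rle_lt_trans; [apply H|]. apply Rmult_lt_compat_r; lra. }
    assert (gl N x d t - N x < t * s).
    { apply Rmult_lt_reg_r with t0; [lra|]. lra. }
    unfold s in *. lra.
  - exfalso.
    assert (Hall : forall t, N x + s * t <= gl N x d t).
    { intros t. destruct (Rtotal_order t 0) as [Ht|[Ht|Ht]].
      - destruct Hf as [H1 H2]. pose proof (H1 (vadd x (vscale t d))).
        unfold gl. eapply Rle_trans; [|apply H].
        replace (ev f (vadd x (vscale t d))) with (ev f x + t * ev f d)
          by (unfold ev, vadd, vscale; simpl; ring).
        rewrite H2. unfold s. nra.
      - subst. rewrite gl0. lra.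
      - apply Rnot_lt_le. intro Hc. apply Hno. exists t. split; auto. lra. }
    destruct (Req_dec (cr x d) 0) as [Hc|Hc].
    + destruct x as [x1 x2], d as [d1 d2]. unfold cr in Hc; simpl in Hc.
      assert (Hr : 0 < x1 * x1 + x2 * x2).
      { destruct (Req_dec x1 0); [destruct (Req_dec x2 0)|]; [subst; tauto|nra|nra]. }
      set (k := (x1 * d1 + x2 * d2) / (x1 * x1 + x2 * x2)).
      assert (Ed : (d1, d2) = vscale k (x1, x2)).
      { unfold vscale, k; apply pt_eq; simpl.
        - apply Rminus_diag_uniq.
          replace (d1 - (x1 * d1 + x2 * d2) / (x1 * x1 + x2 * x2) * x1) with
            (- x2 * (x1 * d2 - x2 * d1) / (x1 * x1 + x2 * x2)) by (field; lra).
          rewrite Hc. field; lra.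
        - apply Rminus_diag_uniq.
          replace (d2 - (x1 * d1 + x2 * d2) / (x1 * x1 + x2 * x2) * x2) with
            (x1 * (x1 * d2 - x2 * d1) / (x1 * x1 + x2 * x2)) by (field; lra).
          rewrite Hc. field; lra. }
      set (t := / (Rabs k + 1)).
      assert (Ht : 0 < t) by (unfold t; apply Rinv_0_lt_compat; pose proof (Rabs_pos k); lra).
      assert (Htk : 0 < 1 + t * k).
      { unfold t. pose proof (Rle_abs (-k)). rewrite Rabs_Ropp in H.
        assert (0 < Rabs k + 1) by (pose proof (Rabs_pos k); lra).
        apply Rmult_lt_reg_r with (Rabs k + 1); [lra|]. field_simplify; lra. }
      pose proof (Hall t). unfold gl in H. rewrite Ed in H.
      replace (vadd (x1, x2) (vscale t (vscale k (x1, x2)))) with (vscale (1 + t * k) (x1,x2)) in H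
        by (unfold vadd, vscale; apply pt_eq; simpl; ring).
      rewrite N_pos_scale in H by (auto; lra).
      assert (Hfd : ev f (d1,d2) = k * N (x1,x2)).
      { rewrite Ed. destruct Hf as [_ H2]. rewrite <- H2. unfold ev, vscale; simpl; ring. }
      unfold s in H. rewrite Hfd in H. nra.
    + destruct (build_functional N HN x d s Hc Hall) as [f' [Hf' Hd]].
      pose proof (norming_unique N HN Hsm x f f' Hx Hf Hf'). subst f'.
      unfold s in Hd. lra.
Qed.

Definition rsum (h : pt -> R) (l : list pt) : R := fold_right (fun a acc => h a + acc) 0 l.

Lemma rsum_ext h h' l : (forall a, In a l -> h a = h' a) -> rsum h l = rsum h' l.
Proof.
  induction l; simpl; auto. intros H. rewrite H by auto. rewrite IHl; auto.
Qed.

Lemma rsum_opp h l : rsum (fun a => - h a) l = - rsum h l.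
Proof. induction l; simpl; [ring|]. rewrite IHl. ring. Qed.

Lemma rsum_nonneg h l : (forall a, In a l -> 0 <= h a) -> 0 <= rsum h l.
Proof.
  induction l as [|b l IH]; simpl; intros H; [lra|].
  assert (0 <= h b) by auto. assert (0 <= rsum h l) by auto. lra.
Qed.

Lemma rsum_nonneg_zero h l : (forall a, In a l -> 0 <= h a) -> rsum h l = 0 ->
  forall a, In a l -> h a = 0.
Proof.
  induction l as [|b l IH]; simpl; [tauto|]. intros H Hs c [Hc|Hc].
  - subst. assert (0 <= rsum h l) by (apply rsum_nonneg; auto).
    assert (0 <= h c) by auto. lra.
  - assert (0 <= h b) by auto.
    assert (0 <= rsum h l) by (apply rsum_nonneg; auto).
    apply IH; auto. lra.
Qed.

Lemma opt_step N (HN : is_norm N) (Hsm : smooth N) p d l :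
  (forall a, In a l -> p <> a) -> forall e, 0 < e ->
  exists t0, 0 < t0 /\ forall t, 0 < t <= t0 ->
    sumdist N l (vadd p (vscale t d)) <=
    sumdist N l p + t * (rsum (fun a => ev (nf N (vsub p a)) d) l + INR (length l) * e).
Proof.
  intros Hl e He. induction l as [|a l IH].
  - exists 1. split; [lra|]. intros t Ht. simpl. lra.
  - destruct IH as [t2 [Ht2 H2]]. { intros; apply Hl; simpl; auto. }
    assert (Hx : vsub p a <> (0,0)).
    { intro Hz. apply (Hl a); simpl; auto. destruct p, a; unfold vsub in Hz; simpl in Hz.
      injection Hz; intros. f_equal; lra. }
    destruct (deriv_upper N HN Hsm (vsub p a) d e Hx He) as [t1 [Ht1 H1]].
    exists (Rmin t1 t2). split; [apply Rmin_glb_lt; auto|].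
    intros t Ht.
    assert (Ht1' : 0 < t <= t1) by (split; [lra|]; eapply Rle_trans; [apply Ht|apply Rmin_l]).
    assert (Ht2' : 0 < t <= t2) by (split; [lra|]; eapply Rle_trans; [apply Ht|apply Rmin_r]).
    specialize (H1 t Ht1'). specialize (H2 t Ht2').
    simpl length. rewrite S_INR. simpl.
    replace (N (vsub (vadd p (vscale t d)) a)) with (gl N (vsub p a) d t).
    + lra.
    + unfold gl. f_equal. unfold vsub, vadd, vscale; apply pt_eq; simpl; ring.
Qed.

Lemma optimality N (HN : is_norm N) (Hsm : smooth N) A p :
  ~ In p A -> FT N A p -> forall d, 0 <= rsum (fun a => ev (nf N (vsub p a)) d) A.
Proof.
  intros Hp Hft d. apply Rnot_lt_le. intro HS.
  set (S := rsum (fun a => ev (nf N (vsub p a)) d) A) in *.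
  set (n := INR (length A)).
  assert (Hn : 0 <= n) by apply pos_INR.
  set (e := - S / (2 * (n + 1))).
  assert (He : 0 < e) by (unfold e; apply Rdiv_lt_0_compat; lra).
  destruct (opt_step N HN Hsm p d A (fun a Ha E => Hp (eq_ind_r (fun z => In z A) Ha E)) e He)
    as [t0 [Ht0 H]].
  specialize (H t0 (conj Ht0 (Rle_refl _))). fold S n in H.
  assert (Hne : n * e <= - S / 2).
  { unfold e. apply Rmult_le_reg_r with (2 * (n + 1)); [lra|].
    field_simplify; [|lra]. nra. }
  pose proof (Hft (vadd p (vscale t0 d))).
  assert (t0 * (S + n * e) < 0) by nra.
  lra.
Qed.

Lemma vsub_nz a b : a <> b -> vsub a b <> (0,0).
Proof.
  intros H Hz. apply H. destruct a, b; unfold vsub in Hz; simpl in Hz.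
  injection Hz; intros. f_equal; lra.
Qed.

Lemma ev_scale f k z : ev f (vscale k z) = k * ev f z.
Proof. unfold ev, vscale; simpl; ring. Qed.

Lemma build_dc N (HN : is_norm N) A p g (sel : pt -> bool) :
  NoDup A -> A <> nil -> ~ In p A -> (fst g <> 0 \/ snd g <> 0) ->
  (forall y, ev g y <= N y) -> (exists y0, N y0 = 1 /\ ev g y0 = 1) ->
  (forall a, In a A -> sel a = true -> ev g (vsub p a) = N (vsub p a)) ->
  (forall a, In a A -> sel a = false -> ev g (vsub a p) = N (vsub a p)) ->
  length (filter (fun a => negb (sel a)) A) = length (filter sel A) ->
  is_double_cluster N (fun z => In z A).
Proof.
  intros HA Hne Hp Hg Hle [y0 [Hy0 Hgy0]] HP HM Hlen.
  set (xs := filter (fun a => negb (sel a)) A).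
  set (ys := filter sel A).
  exists xs, ys. split.
  - split; [exact Hlen|]. split.
    + pose proof (filter_length sel A). fold ys xs in H.
      assert (length A <> 0%nat) by (destruct A; simpl; congruence). fold xs ys in Hlen. lia.
    + split.
      * apply NoDup_app; try apply NoDup_filter; auto.
        intros a Ha Hb. unfold xs, ys in *. apply filter_In in Ha, Hb.
        destruct Ha as [_ Ha], Hb as [_ Hb]. rewrite Hb in Ha. discriminate.
      * exists (fun q => ball_B N q /\ Lf g q). split.
        -- exists (Lf g). split; [|tauto].
           exists (fst g), (snd g), 1. split; auto. split; [unfold Lf; tauto|]. split.
           ++ exists y0. split; [unfold ball_B; lra|]. unfold Lf. exact Hgy0.
           ++ left. intros y Hy. unfold ball_B in Hy. specialize (Hle y). unfold ev in Hle. lra.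
        -- intros [x y] Hxy. simpl.
           pose proof (in_combine_l _ _ _ _ Hxy) as Hx.
           pose proof (in_combine_r _ _ _ _ Hxy) as Hy.
           unfold xs, ys in Hx, Hy. apply filter_In in Hx, Hy.
           destruct Hx as [Hx Hsx], Hy as [Hy Hsy].
           assert (Hsx' : sel x = false) by (destruct (sel x); simpl in *; congruence).
           assert (Hxy' : x <> y) by (intro; subst; congruence).
           pose proof (HM x Hx Hsx') as E1. pose proof (HP y Hy Hsy) as E2.
           assert (Hpos : 0 < N (vsub x y)) by (apply N_pos; auto; apply vsub_nz; auto).
           assert (Hsum : ev g (vsub x y) = N (vsub x p) + N (vsub p y)).
           { rewrite <- E1, <- E2. unfold ev, vsub; simpl; ring. }
           assert (Htri : N (vsub x y) <= N (vsub x p) + N (vsub p y)).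
           { replace (vsub x y) with (vadd (vsub x p) (vsub p y))
               by (unfold vadd, vsub; apply pt_eq; simpl; ring). apply N_tri; auto. }
           assert (Heq : ev g (vsub x y) = N (vsub x y)) by (specialize (Hle (vsub x y)); lra).
           split.
           ++ unfold ball_B. rewrite N_pos_scale by (auto; left; apply Rinv_0_lt_compat; auto).
              right. field. lra.
           ++ change (ev g (vscale (/ N (vsub x y)) (vsub x y)) = 1).
              rewrite ev_scale, Heq. field. lra.
  - intros z. split; intros Hz.
    + apply in_or_app. destruct (sel z) eqn:E.
      * right. unfold ys. apply filter_In. auto.
      * left. unfold xs. apply filter_In. rewrite E. auto.
    + apply in_app_or in Hz. destruct Hz as [Hz|Hz]; apply filter_In in Hz; tauto.
Qed.

Lemma ev_scale_l f k z : ev (vscale k f) z = k * ev f z.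
Proof. unfold ev, vscale; simpl; ring. Qed.

Lemma prod_cases (A B a b : R) : 0 < A -> 0 < B -> -A <= a <= A -> -B <= b <= B ->
  a * b = A * B -> (a = A /\ b = B) \/ (a = -A /\ b = -B).
Proof.
  intros HA HB Ha Hb E. destruct (Rle_lt_dec 0 a) as [H|H].
  - left. assert (Ea : a = A).
    { destruct (Req_dec a A); auto. assert (a < A) by lra.
      assert (a * b <= a * B) by (apply Rmult_le_compat_l; lra).
      assert (a * B < A * B) by (apply Rmult_lt_compat_r; lra). lra. }
    subst a. split; auto. apply Rmult_eq_reg_l with A; lra.
  - right. assert (Ea : a = -A).
    { destruct (Req_dec a (-A)); auto. assert (-a < A) by lra.
      assert (a * b <= (-a) * B) by nra.
      assert ((-a) * B < A * B) by (apply Rmult_lt_compat_r; lra). lra. }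
    subst a. split; auto. apply Rmult_eq_reg_l with A; lra.
Qed.

Lemma count_sum (h : pt -> R) c (sel : pt -> bool) l :
  (forall a, In a l -> (h a = c /\ sel a = true) \/ (h a = -c /\ sel a = false)) ->
  rsum h l = c * (INR (length (filter sel l)) - INR (length (filter (fun a => negb (sel a)) l))).
Proof.
  induction l as [|b l IH]; intros H; simpl; [ring|].
  rewrite IH by (intros; apply H; simpl; auto).
  destruct (H b (or_introl eq_refl)) as [[E1 E2]|[E1 E2]]; rewrite E1, E2; simpl length;
    rewrite ?S_INR; ring.
Qed.

Lemma dc_case N (HN : is_norm N) (Hsm : smooth N) A p psi :
  NoDup A -> A <> nil -> ~ In p A -> FT N A p -> psi <> (0,0) ->
  (forall a, In a A -> ev psi (vsub a p) <= 0) ->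
  is_double_cluster N (fun z => In z A).
Proof.
  intros HA Hne Hp Hft Hpsi Hsep.
  set (phi := fun a => nf N (vsub p a)).
  assert (Hphi : forall a, In a A -> norming N (vsub p a) (phi a)).
  { intros a Ha. apply nf_spec; auto. apply vsub_nz. intro; subst; auto. }
  set (v := (snd psi, - fst psi)).
  assert (Hv : v <> (0,0)).
  { intro H. apply Hpsi. unfold v in H. injection H; intros. destruct psi; simpl in *; f_equal; lra. }
  set (g := nf N v). assert (Hg : norming N v g) by (apply nf_spec; auto).
  assert (HNv : 0 < N v) by (apply N_pos; auto).
  assert (Hzero : forall d, rsum (fun a => ev (phi a) d) A = 0).
  { intros d. pose proof (optimality N HN Hsm A p Hp Hft d) as H1.
    pose proof (optimality N HN Hsm A p Hp Hft (vscale (-1) d)) as H2.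
    unfold phi.
    assert (E : rsum (fun a => ev (nf N (vsub p a)) (vscale (-1) d)) A = rsum (fun a => - ev (nf N (vsub p a)) d) A).
    { apply rsum_ext. intros a _. rewrite ev_scale. ring. }
    rewrite E in H2.
    rewrite rsum_opp in H2. lra. }
  set (dv := (- snd g, fst g)).
  assert (Hbin : forall a, In a A ->
    ev (phi a) dv * ev psi (vsub p a) = N v * N (vsub p a) - ev g (vsub p a) * ev (phi a) v).
  { intros a Ha. destruct (Hphi a Ha) as [_ E1]. destruct Hg as [_ E2].
    rewrite <- E1, <- E2. unfold ev, dv, v; simpl. ring. }
  assert (Hpx : forall a, In a A -> 0 <= ev psi (vsub p a)).
  { intros a Ha. specialize (Hsep a Ha). unfold ev, vsub in *; simpl in *. lra. }
  assert (Hxpos : forall a, In a A -> 0 < N (vsub p a)).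
  { intros a Ha. apply N_pos; auto. apply vsub_nz. intro; subst; auto. }
  assert (HR : forall a, In a A -> 0 <= N v * N (vsub p a) - ev g (vsub p a) * ev (phi a) v).
  { intros a Ha. pose proof (norming_abs N HN _ _ (vsub p a) Hg).
    pose proof (norming_abs N HN _ _ v (Hphi a Ha)).
    pose proof (Hxpos a Ha). nra. }
  assert (Hdet : forall a, In a A -> 0 <= ev (phi a) dv).
  { intros a Ha. destruct (Rle_lt_or_eq_dec _ _ (Hpx a Ha)) as [Hl|He].
    - pose proof (Hbin a Ha). pose proof (HR a Ha).
      apply Rnot_lt_le. intro Hc. nra.
    - pose proof (Hbin a Ha) as B. rewrite <- He in B.
      pose proof (norming_abs N HN _ _ (vsub p a) Hg).
      pose proof (norming_abs N HN _ _ v (Hphi a Ha)).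
      destruct (prod_cases (N (vsub p a)) (N v) (ev g (vsub p a)) (ev (phi a) v)
        (Hxpos a Ha) HNv H H0 ltac:(lra)) as [[_ E]|[_ E]].
      + assert (norming N v (phi a)) by (split; [apply (Hphi a Ha)|auto]).
        pose proof (norming_unique N HN Hsm v _ _ Hv H1 Hg) as U. rewrite U.
        unfold ev, dv; simpl. lra.
      + assert (norming N v (vscale (-1) (phi a))).
        { split.
          - intros y. rewrite ev_scale_l. pose proof (norming_abs N HN _ _ y (Hphi a Ha)). lra.
          - rewrite ev_scale_l, E. ring. }
        pose proof (norming_unique N HN Hsm v _ _ Hv H1 Hg) as U.
        unfold dv. rewrite <- U. unfold ev, vscale; simpl. lra. }
  assert (Hdet0 : forall a, In a A -> ev (phi a) dv = 0)
    by (apply rsum_nonneg_zero; auto).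
  assert (Hcase : forall a, In a A ->
    (ev (phi a) v = N v /\ ev g (vsub p a) = N (vsub p a)) \/
    (ev (phi a) v = - N v /\ ev g (vsub p a) = - N (vsub p a))).
  { intros a Ha. pose proof (Hbin a Ha) as B. rewrite (Hdet0 a Ha) in B.
    pose proof (norming_abs N HN _ _ (vsub p a) Hg).
    pose proof (norming_abs N HN _ _ v (Hphi a Ha)).
    destruct (prod_cases (N (vsub p a)) (N v) (ev g (vsub p a)) (ev (phi a) v)
        (Hxpos a Ha) HNv H H0 ltac:(lra)) as [[E1 E2]|[E1 E2]]; [left|right]; auto. }
  set (sel := fun a => if Rlt_dec 0 (ev (phi a) v) then true else false).
  apply (build_dc N HN A p g sel HA Hne Hp).
  - eapply norming_nonzero; eauto.
  - apply Hg.
  - exists (vscale (/ N v) v). split.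
    + rewrite N_pos_scale by (auto; left; apply Rinv_0_lt_compat; auto). field. lra.
    + rewrite ev_scale. destruct Hg as [_ ->]. field. lra.
  - intros a Ha Hs. unfold sel in Hs. destruct (Rlt_dec 0 (ev (phi a) v)); [|discriminate].
    destruct (Hcase a Ha) as [[_ E]|[E _]]; auto. lra.
  - intros a Ha Hs. unfold sel in Hs. destruct (Rlt_dec 0 (ev (phi a) v)); [discriminate|].
    destruct (Hcase a Ha) as [[E _]|[_ E]]; [lra|].
    rewrite (N_sub_sym N HN a p).
    replace (vsub a p) with (vscale (-1) (vsub p a)) by (unfold vscale, vsub; apply pt_eq; simpl; ring).
    rewrite ev_scale, E. ring.
  - assert (Hc : rsum (fun a => ev (phi a) v) A =
      N v * (INR (length (filter sel A)) - INR (length (filter (fun a => negb (sel a)) A)))).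
    { apply count_sum. intros a Ha. unfold sel.
      destruct (Rlt_dec 0 (ev (phi a) v)); destruct (Hcase a Ha) as [[E _]|[E _]];
        [left|lra|lra|right]; split; auto. }
    rewrite Hzero in Hc. apply INR_eq. symmetry.
    apply Rmult_eq_reg_l with (N v); [|lra]. lra.
Qed.

Fixpoint cone (l : list pt) (s : R) (x : pt) : Prop :=
  match l with
  | nil => s = 0 /\ x = (0,0)
  | a :: l' => exists w, 0 <= w /\ cone l' (s - w) (vsub x (vscale w a))
  end.

Lemma cone_ext l s x s' x' : cone l s x -> s = s' -> x = x' -> cone l s' x'.
Proof. intros H -> ->. auto. Qed.

Lemma cone_nonneg l : forall s x, cone l s x -> 0 <= s.
Proof.
  induction l as [|a l IH]; simpl; intros s x H.
  - destruct H; lra.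
  - destruct H as [w [Hw H]]. apply IH in H. lra.
Qed.

Lemma cone_zero_pt l : forall x, cone l 0 x -> x = (0,0).
Proof.
  induction l as [|a l IH]; simpl; intros x H.
  - tauto.
  - destruct H as [w [Hw H]]. pose proof (cone_nonneg _ _ _ H).
    assert (w = 0) by lra. subst. replace (0 - 0) with 0 in H by ring.
    apply IH in H. destruct x; unfold vsub, vscale in H; simpl in H. injection H; intros.
    f_equal; lra.
Qed.

Lemma cone_0 l : cone l 0 (0,0).
Proof.
  induction l as [|a l IH]; simpl; [auto|]. exists 0. split; [lra|].
  eapply cone_ext; [apply IH|ring|]. unfold vsub, vscale; apply pt_eq; simpl; ring.
Qed.

Lemma cone_add l : forall s x s' x', cone l s x -> cone l s' x' -> cone l (s + s') (vadd x x').
Proof.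
  induction l as [|a l IH]; simpl; intros s x s' x' H H'.
  - destruct H as [-> ->], H' as [-> ->]. split; [ring|]. unfold vadd; apply pt_eq; simpl; ring.
  - destruct H as [w [Hw H]], H' as [w' [Hw' H']]. exists (w + w'). split; [lra|].
    eapply cone_ext; [apply (IH _ _ _ _ H H')|ring|].
    unfold vadd, vsub, vscale; apply pt_eq; simpl; ring.
Qed.

Lemma cone_scale l : forall c s x, 0 <= c -> cone l s x -> cone l (c * s) (vscale c x).
Proof.
  induction l as [|a l IH]; simpl; intros c s x Hc H.
  - destruct H as [-> ->]. split; [ring|]. unfold vscale; apply pt_eq; simpl; ring.
  - destruct H as [w [Hw H]]. exists (c * w). split; [nra|].
    eapply cone_ext; [apply (IH c _ _ Hc H)|ring|].
    unfold vsub, vscale; apply pt_eq; simpl; ring.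
Qed.

Lemma cone_mem l a : In a l -> cone l 1 a.
Proof.
  induction l as [|b l IH]; simpl; [tauto|]. intros [H|H].
  - subst. exists 1. split; [lra|]. eapply cone_ext; [apply cone_0|ring|].
    unfold vsub, vscale; destruct a; apply pt_eq; simpl; ring.
  - exists 0. split; [lra|]. eapply cone_ext; [apply IH; auto|ring|].
    unfold vsub, vscale; destruct a; apply pt_eq; simpl; ring.
Qed.

Lemma cone_weights l : forall s x, cone l s x ->
  exists ws : list R, length ws = length l /\ (forall w, In w ws -> 0 <= w) /\
    fold_right Rplus 0 ws = s /\
    x = fold_right (fun wa acc => vadd (vscale (fst wa) (snd wa)) acc) (0, 0) (combine ws l).
Proof.
  induction l as [|a l IH]; simpl; intros s x H.
  - destruct H as [-> ->]. exists nil. simpl. repeat split; auto. tauto.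
  - destruct H as [w [Hw H]]. destruct (IH _ _ H) as [ws [H1 [H2 [H3 H4]]]].
    exists (w :: ws). simpl. split; [auto|]. split; [intros w0 [<-|Hi]; auto|].
    split; [lra|]. rewrite <- H4. unfold vadd, vsub, vscale; apply pt_eq; simpl; ring.
Qed.

Lemma cone_conv l x : cone l 1 x -> conv l x.
Proof. intros H. apply cone_weights in H. exact H. Qed.

Definition rc (A : list pt) (p : pt) (s : R) (z : pt) := cone A s (vadd z (vscale s p)).

Lemma rc_mem A p a : In a A -> rc A p 1 (vsub a p).
Proof.
  intros H. eapply cone_ext; [apply cone_mem; eauto|ring|].
  unfold vadd, vsub, vscale; apply pt_eq; simpl; ring.
Qed.

Lemma rc_add A p s z s' z' : rc A p s z -> rc A p s' z' -> rc A p (s + s') (vadd z z').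
Proof.
  intros H H'. eapply cone_ext; [apply (cone_add _ _ _ _ _ H H')|ring|].
  unfold vadd, vscale; apply pt_eq; simpl; ring.
Qed.

Lemma rc_scale A p c s z : 0 <= c -> rc A p s z -> rc A p (c * s) (vscale c z).
Proof.
  intros Hc H. eapply cone_ext; [apply (cone_scale _ _ _ _ Hc H)|ring|].
  unfold vadd, vscale; apply pt_eq; simpl; ring.
Qed.

Lemma rc_nonneg A p s z : rc A p s z -> 0 <= s.
Proof. apply cone_nonneg. Qed.

Lemma max_exists (f : pt -> R) l : l <> nil -> exists m, In m l /\ forall w, In w l -> f w <= f m.
Proof.
  induction l as [|a l IH]; [congruence|]. intros _.
  destruct l as [|b l'].
  - exists a. split; simpl; auto. intros w [<-|[]]. lra.
  - destruct IH as [m [Hm Hmax]]; [congruence|].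
    destruct (Rle_lt_dec (f a) (f m)).
    + exists m. split; [simpl; auto|]. intros w [<-|Hw]; auto.
    + exists a. split; [simpl; auto|]. intros w [<-|Hw]; [lra|]. specialize (Hmax w Hw). lra.
Qed.

Lemma vec_eq_z (z w : pt) : z <> (0,0) -> ev z w = ev z z -> cr z w = 0 -> w = z.
Proof.
  destruct z as [z1 z2], w as [w1 w2]. unfold ev, cr; simpl. intros Hz E1 E2.
  assert (Hr : 0 < z1 * z1 + z2 * z2).
  { destruct (Req_dec z1 0); [destruct (Req_dec z2 0)|]; [subst; tauto|nra|nra]. }
  apply pt_eq; simpl.
  - apply Rmult_eq_reg_r with (z1 * z1 + z2 * z2); [|lra].
    replace (w1 * (z1 * z1 + z2 * z2)) with (z1 * (z1 * w1 + z2 * w2) - z2 * (z1 * w2 - z2 * w1)) by ring.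
    rewrite E1, E2. ring.
  - apply Rmult_eq_reg_r with (z1 * z1 + z2 * z2); [|lra].
    replace (w2 * (z1 * z1 + z2 * z2)) with (z2 * (z1 * w1 + z2 * w2) + z1 * (z1 * w2 - z2 * w1)) by ring.
    rewrite E1, E2. ring.
Qed.

Lemma ev_self_pos z : z <> (0,0) -> 0 < ev z z.
Proof.
  destruct z as [z1 z2]. unfold ev; simpl. intros Hz.
  destruct (Req_dec z1 0); [destruct (Req_dec z2 0)|]; [subst; tauto|nra|nra].
Qed.

Lemma cr_scale z k u : cr z (vscale k u) = k * cr z u.
Proof. unfold cr, vscale; simpl; ring. Qed.
Lemma cr_add z u w : cr z (vadd u w) = cr z u + cr z w.
Proof. unfold cr, vadd; simpl; ring. Qed.
Lemma ev_add z u w : ev z (vadd u w) = ev z u + ev z w.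
Proof. unfold ev, vadd; simpl; ring. Qed.

Lemma rc_eq A p s z z' : rc A p s z -> z = z' -> rc A p s z'.
Proof. intros H <-; auto. Qed.

Definition posb (r : R) : bool := if Rlt_dec 0 r then true else false.
Lemma posb_true r : posb r = true <-> 0 < r.
Proof. unfold posb; destruct (Rlt_dec 0 r); split; intros; auto; try discriminate; lra. Qed.

Lemma gordan A p : (forall psi, psi <> (0,0) -> exists a, In a A /\ 0 < ev psi (vsub a p)) ->
  forall z, z <> (0,0) -> exists s, rc A p s z.
Proof.
  intros Hyp z Hz.
  pose proof (ev_self_pos z Hz) as Hzz.
  set (S := fun a => ev z (vsub a p)).
  set (T := fun a => cr z (vsub a p)).
  destruct (classic (exists a, In a A /\ T a = 0 /\ 0 < S a)) as [[a [Ha [HT HS]]]|Hno].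
  - exists (ev z z / S a * 1). eapply rc_eq.
    + apply rc_scale; [left; apply Rdiv_lt_0_compat; auto|]. apply (rc_mem A p a Ha).
    + apply vec_eq_z; auto.
      * rewrite ev_scale. fold (S a). field. lra.
      * rewrite cr_scale. fold (T a). rewrite HT. ring.
  - set (L := filter (fun a => posb (T a)) A).
    set (R := filter (fun a => posb (- T a)) A).
    assert (HL : L <> nil).
    { destruct (Hyp (- snd z, fst z)) as [a [Ha Hpos]].
      { intro H. apply Hz. injection H; intros. destruct z; simpl in *; f_equal; lra. }
      intro HL. assert (In a L). { apply filter_In. split; auto. apply posb_true.
        unfold T, cr; unfold ev in Hpos; simpl in *. lra. }
      rewrite HL in H; auto. }
    assert (HR : R <> nil).
    { destruct (Hyp (snd z, - fst z)) as [a [Ha Hpos]].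
      { intro H. apply Hz. injection H; intros. destruct z; simpl in *; f_equal; lra. }
      intro HR. assert (In a R). { apply filter_In. split; auto. apply posb_true.
        unfold T, cr; unfold ev in Hpos; simpl in *. lra. }
      rewrite HR in H; auto. }
    destruct (max_exists (fun a => S a / T a) L HL) as [aL [HaL HmL]].
    destruct (max_exists (fun a => S a / (- T a)) R HR) as [aR [HaR HmR]].
    apply filter_In in HaL, HaR. destruct HaL as [HaL HtL], HaR as [HaR HtR].
    apply posb_true in HtL, HtR.
    set (al := S aL / T aL). set (be := S aR / (- T aR)).
    destruct (Rlt_dec 0 (al + be)) as [Hab|Hab].
    + set (k := ev z z / (al + be)).
      exists (k / T aL * 1 + k / (- T aR) * 1).
      eapply rc_eq.
      * apply rc_add.
        -- apply rc_scale; [left; apply Rdiv_lt_0_compat; [apply Rdiv_lt_0_compat|]; auto|apply (rc_mem A p aL HaL)].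
        -- apply rc_scale; [left; apply Rdiv_lt_0_compat; [apply Rdiv_lt_0_compat|]; auto; lra|apply (rc_mem A p aR HaR)].
      * apply vec_eq_z; auto.
        -- rewrite ev_add, !ev_scale. fold (S aL) (S aR).
           assert (Hq : S aL * - T aR + S aR * T aL = (al + be) * (T aL * - T aR))
             by (unfold al, be; field; lra).
           assert (0 < (al + be) * (T aL * - T aR)) by (apply Rmult_lt_0_compat; nra).
           unfold k, al, be in *. field. repeat split; lra.
        -- rewrite cr_add, !cr_scale. fold (T aL) (T aR). unfold k. field. split; lra.
    + exfalso.
      set (psi := (fst z + al * snd z, snd z - al * fst z)).
      assert (Hpsi : psi <> (0,0)).
      { intro H. unfold psi in H. injection H; intros.
        apply Hz. destruct z as [z1 z2]; simpl in *.
        assert (z2 * (1 + al * al) = 0) by nra.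
        assert (z2 = 0). { apply Rmult_integral in H2. destruct H2; auto. nra. }
        f_equal; nra. }
      destruct (Hyp psi Hpsi) as [a [Ha Hpos]].
      assert (Eps : ev psi (vsub a p) = S a - al * T a).
      { unfold psi, S, T, ev, cr; simpl. ring. }
      rewrite Eps in Hpos.
      destruct (Rtotal_order (T a) 0) as [Hn|[H0|Hp]].
      * assert (In a R) by (apply filter_In; split; auto; apply posb_true; lra).
        specialize (HmR a H). fold be in HmR.
        assert (S a <= be * (- T a)).
        { apply Rmult_le_compat_r with (r := - T a) in HmR; [|lra].
          replace (S a / - T a * - T a) with (S a) in HmR by (field; lra). lra. }
        nra.
      * apply Hno. exists a. split; auto. split; auto. rewrite H0 in Hpos. lra.
      * assert (In a L) by (apply filter_In; split; auto; apply posb_true; lra).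
        specialize (HmL a H). fold al in HmL.
        assert (S a <= al * T a).
        { apply Rmult_le_compat_r with (r := T a) in HmL; [|lra].
          replace (S a / T a * T a) with (S a) in HmL by (field; lra). lra. }
        lra.
Qed.

Lemma abs_comb (c1 a1 c2 a2 B : R) : Rabs a1 <= B -> Rabs a2 <= B ->
  Rabs (c1 * a1 - c2 * a2) <= (Rabs c1 + Rabs c2) * B.
Proof.
  intros H1 H2. unfold Rminus. eapply Rle_trans; [apply Rabs_triang|].
  rewrite Rabs_Ropp, !Rabs_mult.
  pose proof (Rabs_pos c1). pose proof (Rabs_pos c2).
  assert (Rabs c1 * Rabs a1 <= Rabs c1 * B) by (apply Rmult_le_compat_l; auto).
  assert (Rabs c2 * Rabs a2 <= Rabs c2 * B) by (apply Rmult_le_compat_l; auto).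
  lra.
Qed.

Lemma eucl_bound N (HN : is_norm N) : exists K, 0 < K /\ forall z,
  Rabs (fst z) <= K * N z /\ Rabs (snd z) <= K * N z.
Proof.
  assert (He1 : ((1,0):pt) <> (0,0)) by (intro H; injection H; lra).
  set (f := nf N (1,0)). pose proof (nf_spec N HN _ He1) as Hf. fold f in Hf.
  set (w := (- snd f, fst f)).
  assert (Hw : w <> (0,0)).
  { intro H. unfold w in H. injection H; intros.
    destruct (norming_nonzero N HN _ _ He1 Hf); lra. }
  set (h := nf N w). pose proof (nf_spec N HN _ Hw) as Hh. fold h in Hh.
  set (D := ev h w).
  assert (HD : 0 < D) by (unfold D; destruct Hh as [_ ->]; apply N_pos; auto).
  set (K := (Rabs (fst f) + Rabs (snd f) + Rabs (fst h) + Rabs (snd h)) / D + 1).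
  assert (HK0 : 0 <= (Rabs (fst f) + Rabs (snd f) + Rabs (fst h) + Rabs (snd h)) / D).
  { apply Rmult_le_pos; [|left; apply Rinv_0_lt_compat; auto].
    pose proof (Rabs_pos (fst f)). pose proof (Rabs_pos (snd f)).
    pose proof (Rabs_pos (fst h)). pose proof (Rabs_pos (snd h)). lra. }
  exists K. split; [unfold K; lra|]. intros z.
  pose proof (norming_abs N HN _ _ z Hf) as A1.
  pose proof (norming_abs N HN _ _ z Hh) as A2.
  assert (B1 : Rabs (ev f z) <= N z) by (apply Rabs_le; lra).
  assert (B2 : Rabs (ev h z) <= N z) by (apply Rabs_le; lra).
  pose proof (N_nonneg N HN z) as Hz.
  assert (E1 : fst z * D = snd h * ev f z - snd f * ev h z)
    by (unfold D, w, ev; simpl; ring).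
  assert (E2 : snd z * D = fst f * ev h z - fst h * ev f z)
    by (unfold D, w, ev; simpl; ring).
  pose proof (abs_comb (snd h) (ev f z) (snd f) (ev h z) (N z) B1 B2) as C1.
  pose proof (abs_comb (fst f) (ev h z) (fst h) (ev f z) (N z) B2 B1) as C2.
  rewrite <- E1 in C1. rewrite <- E2 in C2.
  rewrite Rabs_mult, (Rabs_pos_eq D) in C1, C2 by lra.
  pose proof (Rabs_pos (fst f)). pose proof (Rabs_pos (snd f)).
  pose proof (Rabs_pos (fst h)). pose proof (Rabs_pos (snd h)).
  assert (KD : K * D = Rabs (fst f) + Rabs (snd f) + Rabs (fst h) + Rabs (snd h) + D)
    by (unfold K; field; lra).
  split.
  - apply Rmult_le_reg_r with D; auto. rewrite Rmult_assoc, (Rmult_comm (N z)), <- Rmult_assoc, KD. nra.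
  - apply Rmult_le_reg_r with D; auto. rewrite Rmult_assoc, (Rmult_comm (N z)), <- Rmult_assoc, KD. nra.
Qed.

Lemma rc_coord A p d s s' : rc A p s d -> rc A p s' (vscale (-1) d) ->
  forall t, exists r, 0 <= r <= Rabs t * (s + s') /\ rc A p r (vscale t d).
Proof.
  intros H1 H2 t. pose proof (rc_nonneg _ _ _ _ H1). pose proof (rc_nonneg _ _ _ _ H2).
  destruct (Rle_lt_dec 0 t) as [Ht|Ht].
  - exists (t * s). rewrite Rabs_pos_eq by auto. split; [split; nra|].
    apply rc_scale; auto.
  - exists (- t * s'). rewrite Rabs_left by auto. split; [split; nra|].
    eapply rc_eq; [apply rc_scale; [lra|exact H2]|].
    unfold vscale; apply pt_eq; simpl; ring.
Qed.

Lemma rc_pos A p s d : rc A p s d -> d <> (0,0) -> 0 < s.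
Proof.
  intros H Hd. destruct (Rle_lt_or_eq_dec _ _ (rc_nonneg _ _ _ _ H)) as [|E]; auto.
  exfalso. subst s. apply cone_zero_pt in H. apply Hd. rewrite <- H.
  destruct d; unfold vadd, vscale; apply pt_eq; simpl; ring.
Qed.

Lemma interior_case N (HN : is_norm N) A p :
  (forall psi, psi <> (0,0) -> exists a, In a A /\ 0 < ev psi (vsub a p)) ->
  norm_interior N (conv A) p.
Proof.
  intros Hyp. pose proof (gordan A p Hyp) as G.
  set (e1 := ((1,0) : pt)). set (e2 := ((0,1) : pt)).
  assert (N1 : e1 <> (0,0)) by (unfold e1; intro H; injection H; lra).
  assert (N2 : e2 <> (0,0)) by (unfold e2; intro H; injection H; lra).
  assert (N1' : vscale (-1) e1 <> (0,0)) by (unfold e1, vscale; simpl; intro H; injection H; lra).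
  assert (N2' : vscale (-1) e2 <> (0,0)) by (unfold e2, vscale; simpl; intro H; injection H; lra).
  destruct (G e1 N1) as [s1 H1]. destruct (G _ N1') as [s2 H2].
  destruct (G e2 N2) as [s3 H3]. destruct (G _ N2') as [s4 H4].
  pose proof (rc_pos _ _ _ _ H1 N1). pose proof (rc_pos _ _ _ _ H2 N1').
  pose proof (rc_pos _ _ _ _ H3 N2). pose proof (rc_pos _ _ _ _ H4 N2').
  assert (Hp : cone A 1 p).
  { pose proof (rc_add _ _ _ _ _ _ H1 H2) as H12.
    apply (cone_scale _ (/ (s1 + s2))) in H12; [|left; apply Rinv_0_lt_compat; lra].
    eapply cone_ext; [exact H12|field; lra|].
    unfold e1, vadd, vscale; destruct p; apply pt_eq; simpl; field; lra. }
  destruct (eucl_bound N HN) as [K [HK HKb]].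
  set (M := s1 + s2 + s3 + s4).
  exists (/ (2 * K * (M + 1))). split.
  { apply Rinv_0_lt_compat. unfold M. nra. }
  intros q Hq. apply cone_conv.
  set (z := vsub q p) in *.
  destruct (rc_coord _ _ _ _ _ H1 H2 (fst z)) as [r1 [Hr1 R1]].
  destruct (rc_coord _ _ _ _ _ H3 H4 (snd z)) as [r2 [Hr2 R2]].
  pose proof (rc_add _ _ _ _ _ _ R1 R2) as R12.
  destruct (HKb z) as [B1 B2].
  pose proof (N_nonneg N HN z) as Hz.
  assert (Hr : r1 + r2 <= 1).
  { assert (HM : 0 < M) by (unfold M; lra).
    assert (Hnz : N z * (2 * K * (M + 1)) < 1).
    { apply Rmult_lt_reg_r with (/ (2 * K * (M + 1))).
      - apply Rinv_0_lt_compat; nra.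
      - rewrite Rmult_assoc, Rinv_r, Rmult_1_r by nra. lra. }
    pose proof (Rabs_pos (fst z)). pose proof (Rabs_pos (snd z)).
    assert (r1 <= K * N z * (s1 + s2)) by (eapply Rle_trans; [apply Hr1|]; apply Rmult_le_compat_r; lra).
    assert (r2 <= K * N z * (s3 + s4)) by (eapply Rle_trans; [apply Hr2|]; apply Rmult_le_compat_r; lra).
    unfold M in *. nra. }
  pose proof (cone_scale _ (1 - (r1 + r2)) _ _ ltac:(lra) Hp) as Hp'.
  pose proof (cone_add _ _ _ _ _ R12 Hp') as Hfin.
  eapply cone_ext; [exact Hfin|ring|].
  unfold z, e1, e2, vadd, vsub, vscale; destruct p, q; apply pt_eq; simpl; ring.
Qed.

Theorem corollary4p9 (N : pt -> R) (HN : is_norm N) (Hsm : smooth N)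
  (A : list pt) (HA : NoDup A) (Hne : A <> nil)
  (Hdc : ~ is_double_cluster N (fun z => In z A))
  (Hpdc : ~ is_pseudo_double_cluster N (fun z => In z A)) :
  forall p, FT N A p -> In p A \/ norm_interior N (conv A) p.
Proof.
  intros p Hft. destruct (classic (In p A)) as [Hp|Hp]; [left; auto|right].
  destruct (classic (exists psi, psi <> (0,0) /\ forall a, In a A -> ev psi (vsub a p) <= 0))
    as [[psi [Hpsi Hsep]]|Hno].
  - exfalso. apply Hdc. eapply dc_case; eauto.
  - apply (interior_case N HN). intros psi Hpsi.
    apply NNPP. intro Hc. apply Hno. exists psi. split; auto.
    intros a Ha. apply Rnot_lt_le. intro Hlt. apply Hc. eauto.
Qed.
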